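(* The numbers $s_k(m)$ and $s(m)$ satisfy: (i) $s(0)=1$; (ii) $s_0(1)=1$ and $s_k(1)=0$ for $k>0$; (iii) $s_0(2)=0$, $s_1(2)=1$ and $s_k(2)=0$ for $k>1$; (iv) for every integer $m\ge1$: $s_m(2^m)=1$, $$s_{m-1}(2^m)=\sum_{j=0}^{m-1}\sum_{k=0}^{m-2}s_k\big(2^m-(2^{m-1}+\dots+2^j)\big),$$ and $s_k(2^m)=0$ for $k\ne m,m-1$; (v) for every integer $m\ge1$ and $l=0,1,\dots,m-1$: $$s_m(2^m+\dots+2^l)=1+\sum_{j=l}^{m-1}\sum_{k=0}^{m-1}s_k(2^j+\dots+2^l),$$ $$s_{m-1}(2^m+\dots+2^l)=\sum_{j=0}^{m-1}\sum_{k=0}^{m-2}s_k\big((2^m+\dots+2^l)-(2^{m-1}+\dots+2^j)\big),$$ and $s_k(2^m+\dots+2^l)=0$ for $k\ne m,m-1$; (vi) for $l=2,3,\dots,m-1$ and $a_0,\dots,a_{l-2}\in\{0,1\}$ not all $0$, writing $A=a_{l-2}2^{l-2}+\dots+a_02^0$: $$s_m(2^m+\dots+2^l+A)=\sum_{k=0}^{m-1}s_k(A)+\sum_{j=l}^{m-1}\sum_{k=0}^{m-1}s_k(2^j+\dots+2^l+A),$$ $$s_{m-1}(2^m+\dots+2^l+A)=\sum_{j=0}^{m-1}\sum_{k=0}^{m-2}s_k\big((2^m+\dots+2^l+A)-(2^{m-1}+\dots+2^j)\big),$$ and $s_k(2^m+\dots+2^l+A)=0$ for $k\ne m,m-1$;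 (vii) for $m>1$ and $a_0,\dots,a_{m-2}\in\{0,1\}$ not all $0$, writing $B=a_{m-2}2^{m-2}+\dots+a_02^0$: $$s_m(2^m+B)=\sum_{k=0}^{m-1}s_k(B),$$ $$s_{m-1}(2^m+B)=\sum_{j=0}^{m-1}\sum_{k=0}^{m-2}s_k\big((2^m+B)-(2^{m-1}+\dots+2^j)\big),$$ and $s_k(2^m+B)=0$ for $k\ne m,m-1$.
   Context: For a natural number $m>0$ and $k\in\{0,1,2,\dots\}$, $S_k(m)$ is the set of all finite sequences $((m_1,l_1),\dots,(m_t,l_t))$ with $t\ge1$ of pairs of natural numbers such that $k=m_1>m_2>\dots>m_t\ge0$, $m_j\ge l_j\ge0$ for all $j$, and $m=\sum_{j=1}^t\sum_{p=0}^{l_j}2^{m_j-p}$; $s_k(m)=|S_k(m)|$. For $m>0$, $s(m)=\sum_{k\ge0}s_k(m)$ (a finite sum, since $s_k(m)=0$ for all but finitely many $k$), and $s(0)=1$ by convention. Empty sums are $0$. *)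

(* Defs.v *)
From mathcomp Require Import all_boot.
Set Implicit Arguments. Unset Strict Implicit. Unset Printing Implicit Defensive.

Definition pair_val (q : nat * nat) : nat := \sum_(0 <= p < q.2.+1) 2 ^ (q.1 - p).

Definition inS (k m : nat) (s : seq (nat * nat)) : bool :=
  [&& 0 < m, s != [::], (head (0, 0) s).1 == k,
      sorted (fun a b : nat * nat => b.1 < a.1) s,
      all (fun q : nat * nat => q.2 <= q.1) s
    & m == sumn (map pair_val s)].

Fixpoint allseqs (T : Type) (A : seq T) (n : nat) : seq (seq T) :=
  match n with
  | 0 => [:: [::]]
  | n'.+1 => [seq x :: s | x <- A, s <- allseqs A n']
  end.

Definition pairs (k : nat) : seq (nat * nat) :=
  [seq (i, j) | i <- iota 0 k.+1, j <- iota 0 k.+1].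

(* duplicate-free list of all sequences of length <= k+1 of pairs with
   entries <= k; it contains every element of S_k(m), since the m_j are
   strictly decreasing from k, and l_j <= m_j <= k. *)
Definition candidates (k : nat) : seq (seq (nat * nat)) :=
  flatten [seq allseqs (pairs k) t | t <- iota 0 k.+2].

Definition sk (k m : nat) : nat := count (inS k m) (candidates k).

(* s(m) = sum_{k>=0} s_k(m); for m > 0, s_k(m) = 0 when k >= m
   (any element of S_k(m) has m >= 2^k > k), so the sum is truncated at m. *)
Definition s (m : nat) : nat := if m == 0 then 1 else \sum_(k < m.+1) sk k m.

Definition geom (hi lo : nat) : nat := \sum_(lo <= i < hi.+1) 2 ^ i.

Definition bin (a : nat -> bool) (n : nat) : nat := \sum_(i < n) (a i : nat) * 2 ^ i.

(* Main.v *)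
Require Import Defs.
From mathcomp Require Import all_boot zify.


Lemma count_allpairs (T1 T2 T3 : Type) (f : T1 -> T2 -> T3) (P : pred T3) A B :
  count P [seq f x y | x <- A, y <- B] = \sum_(x <- A) count (fun y => P (f x y)) B.
Proof.
elim: A => [|x A IH]; first by rewrite big_nil.
by rewrite big_cons /= count_cat count_map IH.
Qed.

Lemma cnt_eq (T : eqType) (L1 L2 : seq T) (P : pred T) :
  uniq L1 -> uniq L2 -> (forall x, P x -> x \in L1) -> (forall x, P x -> x \in L2) ->
  count P L1 = count P L2.
Proof.
move=> u1 u2 h1 h2; rewrite -!size_filter; apply: perm_size.
apply: uniq_perm; rewrite ?filter_uniq // => x; rewrite !mem_filter.
by case Px: (P x) => //=; rewrite h1 ?h2.
Qed.

Lemma allseqs_size (T : eqType) (A : seq T) t x : x \in allseqs A t -> size x = t.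
Proof.
elim: t x => [|t IH] x /=; first by rewrite inE => /eqP ->.
by case/allpairsP => -[a y] /= [_ /IH <- ->].
Qed.

Arguments allseqs_size {T A t x}.

Lemma allseqs_uniq (T : eqType) (A : seq T) t : uniq A -> uniq (allseqs A t).
Proof.
move=> uA; elim: t => [|t IH] //=.
apply: allpairs_uniq => // -[a x] [b y] _ _ /= [-> ->] //.
Qed.

Lemma mem_allseqs (T : eqType) (A : seq T) x : all (mem A) x -> x \in allseqs A (size x).
Proof.
elim: x => [|a x IH] /=; first by rewrite inE.
case/andP => aA /IH xA; apply/allpairsP; exists (a, x) => //.
Qed.

Lemma flat_uniq (T : eqType) (A : seq T) ts : uniq A -> uniq ts ->
  uniq (flatten [seq allseqs A t | t <- ts]).
Proof.
move=> uA; elim: ts => [|t ts IH] //= /andP [tts uts].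
rewrite cat_uniq allseqs_uniq // IH // andbT.
apply/hasPn => x /flattenP [y /mapP [t' t'ts ->]] xin'.
apply/negP => xin; have := allseqs_size xin'; rewrite (allseqs_size xin) => eq.
by rewrite eq t'ts in tts.
Qed.

Lemma pairs_uniq K : uniq (pairs K).
Proof. by apply: allpairs_uniq; rewrite ?iota_uniq // => -[a b] [c d] _ _ /= [-> ->]. Qed.

Lemma cand_uniq K : uniq (candidates K).
Proof. by apply: flat_uniq; rewrite ?pairs_uniq ?iota_uniq. Qed.

Lemma mem_cand K x : size x <= K.+1 -> all (fun q : nat * nat => (q.1 <= K) && (q.2 <= K)) x ->
  x \in candidates K.
Proof.
move=> sx ax; apply/flattenP; exists (allseqs (pairs K) (size x)).
  by apply/mapP; exists (size x); rewrite // mem_iota.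
apply: mem_allseqs; apply/allP => -[a b] /(allP ax) /andP [ha hb].
by apply/allpairsP; exists (a, b); rewrite !mem_iota.
Qed.

Lemma nil_cand K : [::] \in candidates K.
Proof. by apply: mem_cand. Qed.

Definition rel1 := (fun a b : nat * nat => b.1 < a.1).

Lemma rel1_trans : transitive rel1.
Proof. by move=> a b c /= h1 h2; apply: ltn_trans h1. Qed.

Lemma sorted_size b (x : seq (nat * nat)) : sorted rel1 x -> all (fun q : nat * nat => q.1 < b) x ->
  size x <= b.
Proof.
move=> sx ax; rewrite -(size_map fst) -[b](size_iota 0).
apply: uniq_leq_size.
  apply: (@sorted_uniq _ (fun a b : nat => b < a)).
  - by move=> p q r h1 h2; apply: ltn_trans h1.
  - by move=> p; rewrite ltnn.
  - by rewrite sorted_map.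
by move=> y /mapP [q /(allP ax) qb ->]; rewrite mem_iota.
Qed.

Definition tl (b r : nat) (x : seq (nat * nat)) : bool :=
  if x is q :: _ then (q.1 < b) && inS q.1 r x else r == 0.

Lemma tl_cand K b r x : b <= K.+1 -> tl b r x -> x \in candidates K.
Proof.
case: x => [|q x] bK /=; first by rewrite nil_cand.
case/andP => qb /and5P [_ _ _ srt /andP [al _]].
have hp := order_path_min rel1_trans srt.
apply: mem_cand.
  have := @sorted_size q.1 x (path_sorted srt) hp; rewrite /=; lia.
apply/allP => p; rewrite inE => /orP [/eqP ->| px].
  have := allP al q; rewrite inE eqxx /= => /(_ isT); lia.
have := allP hp p px; rewrite /rel1 /=; have := allP al p; rewrite inE px orbT => /(_ isT) /=; lia.
Qed.

Lemma inS_cons k n l x : inS k n ((k, l) :: x) =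
  [&& 0 < n, l <= k, pair_val (k, l) <= n & tl k (n - pair_val (k, l)) x].
Proof.
have E : forall a b c, (a == b + c) = (b <= a) && (a - b == c).
  by move=> a b c; apply/idP/idP => [/eqP->|/andP[h1 /eqP h2]]; [rewrite leq_addr addKn eqxx | apply/eqP; lia].
case: x => [|q x]; rewrite /inS /= !eqxx E /= ?andbT //.
rewrite /inS /=.
have qpos : 0 < pair_val q by rewrite /pair_val big_nat_recl // addn_gt0 expn_gt0.
case h: (n - pair_val (k, l) == pair_val q + sumn [seq pair_val i | i <- x]); last by rewrite !andbF.
have -> : 0 < n - pair_val (k, l) by rewrite (eqP h); lia.
rewrite eqxx.
by case: (0 < n); case: (l <= k); case: (_ <= n); case: (q.1 < k); case: (path (fun a b : nat * nat => b.1 < a.1) q x); case: (q.2 <= q.1); case: (all (fun q0 : nat * nat => q0.2 <= q0.1) x).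
Qed.

Lemma inS_cand K k n x : k <= K -> inS k n x -> x \in candidates K.
Proof.
move=> kK h; apply: (@tl_cand K k.+1 n) => //.
case: x h => [|q x] h; first by rewrite /inS andbF in h.
have hq : q.1 = k by move: h; rewrite /inS /= => /and3P [_ /eqP hk _].
by rewrite /= hq ltnSn.
Qed.

Definition T b r := if r == 0 then 1 else \sum_(0 <= k < b) sk k r.

Lemma count_sum (U : Type) (a : pred U) s : count a s = \sum_(x <- s) a x.
Proof. by rewrite -sumn_count sumnE big_map. Qed.

Lemma sum_eq1 q b (c : bool) : \sum_(0 <= k < b) ((q == k) && c : nat) = (q < b) && c.
Proof.
case: c; last by rewrite andbF big1 // => k _; rewrite andbF.
elim: b => [|b IH]; first by rewrite big_geq.
rewrite big_nat_recr //= !andbT in IH *; rewrite IH ltnS.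
by case: ltngtP.
Qed.

Lemma count_tl K b r : b <= K.+1 -> count (tl b r) (candidates K) = T b r.
Proof.
move=> bK; rewrite /T; case: (r =P 0) => [->|/eqP r0].
  rewrite (@eq_count _ _ (pred1 [::])); first by rewrite count_uniq_mem ?cand_uniq ?nil_cand.
  by case=> [|q x] //=; rewrite /inS /= ?andbF.
have E : forall x, (tl b r x : nat) = \sum_(0 <= k < b) inS k r x.
  case=> [|q x] /=.
    by rewrite (negbTE r0) big1 // => k _; rewrite /inS andbF.
  rewrite -sum_eq1; apply: eq_big_nat => k _.
  rewrite /inS /= eqxx; case: (q.1 == k) => //=.
  by case: (0 < r).
rewrite count_sum (eq_bigr _ (fun x _ => E x)) exchange_big /=.
apply: eq_big_nat => k /andP [_ kb].
rewrite -count_sum /sk; apply: cnt_eq; rewrite ?cand_uniq // => x; apply: inS_cand => //.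
by rewrite -ltnS (leq_trans kb).
Qed.

Lemma skR k n : sk k n = if n == 0 then 0 else
  \sum_(0 <= l < k.+1) (if pair_val (k, l) <= n then T k (n - pair_val (k, l)) else 0).
Proof.
pose V := [seq (k, l) :: x | l <- iota 0 k.+1, x <- candidates k].
have uV : uniq V.
  by apply: allpairs_uniq; rewrite ?iota_uniq ?cand_uniq // => -[l x] [l' x'] _ _ /= [-> ->].
rewrite /sk (@cnt_eq _ _ V) ?cand_uniq //; last first.
- case=> [|[k' l] x] h; first by rewrite /inS andbF in h.
  have hk : k' = k by move: h; rewrite /inS /= => /and3P [_ /eqP hk _].
  subst k'; move: h; rewrite inS_cons => /and4P [_ lk _ htl].
  apply/allpairsP; exists (l, x); split => //; first by rewrite mem_iota.
  exact: (@tl_cand k k _ _ (leqnSn k) htl).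
- by move=> x; apply: inS_cand.
rewrite count_allpairs /index_iota subn0.
case: (n =P 0) => [->|/eqP n0].
  by rewrite big1 // => l _; rewrite (@eq_count _ _ pred0) ?count_pred0 // => x; rewrite inS_cons.
apply: eq_big_seq => l; rewrite mem_iota add0n ltnS => /andP [_ lk].
rewrite (@eq_count _ _ (fun x => (pair_val (k, l) <= n) && tl k (n - pair_val (k, l)) x)); last first.
  by move=> x; rewrite inS_cons lt0n n0 lk.
case: (pair_val (k, l) <= n); last by rewrite count_pred0.
by rewrite count_tl.
Qed.

Lemma geomE h lo : lo <= h.+1 -> geom h lo + 2 ^ lo = 2 ^ h.+1.
Proof.
rewrite /geom; elim: h lo => [|h IH] lo.
  by case: lo => [|[|]] //= _; rewrite ?big_nat1 ?big_geq.
rewrite leq_eqVlt => /orP [/eqP ->|]; first by rewrite big_geq.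
rewrite ltnS => lo_h; rewrite big_nat_recr //= -addnAC IH // !expnS; lia.
Qed.

Lemma pvE k l : l <= k -> pair_val (k, l) + 2 ^ (k - l) = 2 ^ k.+1.
Proof.
rewrite /pair_val /=; elim: l => [|l IH] lk.
  by rewrite big_nat1 subn0 expnS; lia.
rewrite big_nat_recr //= -addnA.
have -> : 2 ^ (k - l.+1) + 2 ^ (k - l.+1) = 2 ^ (k - l).
  by rewrite -(subnSK lk) expnS; lia.
by rewrite IH // ltnW.
Qed.

Lemma skG k n : sk k n = if n == 0 then 0 else
  \sum_(0 <= j < k.+1) (if geom k j <= n then T k (n - geom k j) else 0).
Proof.
rewrite skR; case: (n == 0) => //.
rewrite big_nat_rev; apply: eq_big_nat => j /andP [_ jk].
have -> : 0 + k.+1 - j.+1 = k - j by rewrite add0n subSS.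
have -> // : pair_val (k, k - j) = geom k j.
have h1 := @pvE k (k - j) (leq_subr j k); have h2 := @geomE k j (ltnW jk).
rewrite subKn // in h1; lia.
Qed.

Lemma sum_pos b (F : nat -> nat) : 0 < \sum_(0 <= j < b) F j -> exists j, j < b /\ 0 < F j.
Proof.
elim: b => [|b IH]; first by rewrite big_geq.
rewrite big_nat_recr //= addn_gt0 => /orP [/IH [j [jb h]]|h].
  by exists j; split => //; apply: ltnW.
by exists b.
Qed.

Lemma geom_ge k j : j <= k -> 2 ^ k <= geom k j /\ geom k j < 2 ^ k.+1.
Proof.
move=> jk; have h := @geomE k j (leqW jk).
have h1 : 2 ^ j <= 2 ^ k by rewrite leq_exp2l.
have h2 : 0 < 2 ^ j by rewrite expn_gt0.
rewrite expnS in h *; lia.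
Qed.

Arguments geom_ge {k j}.

Lemma sk_bound k n : 0 < sk k n -> 2 ^ k <= n /\ n + 2 <= 2 ^ k.+2.
Proof.
elim/ltn_ind: k n => k IH n.
rewrite skG; case: (n =P 0) => [-> //|/eqP n0].
case/sum_pos => j [jk].
case: ifP => // gn jT; rewrite ltnS in jk; have [g1 g2] := geom_ge jk.
have hT : n - geom k j + 2 <= 2 ^ k.+1.
  case: (n - geom k j =P 0) => [e|/eqP ne].
    by rewrite e expnS; have := expn_gt0 2 k; lia.
  move: jT; rewrite /T (negbTE ne).
  case/sum_pos => k' [k'k /IH [//|_ h]].
  apply: (leq_trans h); by rewrite leq_exp2l.
rewrite !expnS in hT g2 *; lia.
Qed.

Lemma skz m n k : 2 ^ m <= n -> n < 2 ^ m.+1 -> k <> m -> k <> m.-1 -> sk k n = 0.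
Proof.
move=> h1 h2 km km1; case: (posnP (sk k n)) => // /sk_bound [b1 b2].
case: (ltngtP k m) => [lt|gt|eq] //.
- have : k.+2 <= m by lia.
  rewrite -(leq_exp2l _ _ (isT : 1 < 2)) => h; lia.
- have : 2 ^ m.+1 <= 2 ^ k by rewrite leq_exp2l.
  lia.
Qed.

Lemma skm m l A : l <= m -> 2 * A < 2 ^ l ->
  sk m (geom m l + A) = T m A + \sum_(l <= j < m) \sum_(0 <= k < m) sk k (geom j l + A).
Proof.
move=> lm hA; have [g1 g2] := geom_ge lm.
have hl := @geomE m l (leqW lm).
rewrite skG; have -> : (geom m l + A == 0) = false by have := expn_gt0 2 m; lia.
rewrite (@big_cat_nat _ _ _ l) //= ?(leqW lm) //.
rewrite big1_seq ?add0n; last first.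
  move=> j; rewrite mem_index_iota => /andP [_ jl].
  have hj : geom m j + 2 ^ j = 2 ^ m.+1 by apply: geomE; lia.
  have : 2 * 2 ^ j <= 2 ^ l by rewrite -expnS leq_exp2l //; lia.
  case: ifP => // h; lia.
rewrite big_nat_recl ?ltnS //.
have -> : geom m l <= geom m l + A by apply: leq_addr.
rewrite addKn; congr (_ + _); apply: eq_big_nat => j /andP [lj jm].
have hj := @geomE m j.+1 (leqW jm).
have hj2 := @geomE j l (leqW lj).
rewrite ifT; last by lia.
have -> : geom m l + A - geom m j.+1 = geom j l + A by lia.
rewrite /T ifF //; apply: negbTE; rewrite -lt0n.
have : 2 ^ l <= 2 ^ j by rewrite leq_exp2l.
have := expn_gt0 2 j; rewrite expnS in hj2; lia.
Qed.

Lemma skm1 m n : 1 <= m -> 2 ^ m <= n ->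
  sk m.-1 n = \sum_(0 <= j < m) \sum_(0 <= k < m.-1) sk k (n - geom m.-1 j).
Proof.
move=> m1 hn; rewrite skG prednK //.
have -> : (n == 0) = false by have := expn_gt0 2 m; lia.
apply: eq_big_nat => j /andP [_ jm].
have hj := @geomE m.-1 j; rewrite prednK // in hj; have := hj (ltnW jm).
have := expn_gt0 2 j => h1 h2.
rewrite ifT; last by lia.
rewrite /T ifF //; lia.
Qed.

Lemma bin_lt (a : nat -> bool) n : bin a n < 2 ^ n.
Proof.
rewrite /bin; elim: n => [|n IH]; first by rewrite big_ord0.
rewrite big_ord_recr /= expnS.
have : (a n : nat) * 2 ^ n <= 2 ^ n by case: (a n); rewrite ?mul1n ?mul0n.
set S := (X in X + _ < _); have : S < 2 ^ n by exact: IH.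
lia.
Qed.

Lemma bin_pos {a : nat -> bool} {n i} : i < n -> a i -> 0 < bin a n.
Proof.
move=> ilt ai; rewrite /bin (bigD1 (Ordinal ilt)) //= ai mul1n.
by rewrite addn_gt0 expn_gt0.
Qed.


Theorem theorem4p6 :
  (* (i) *)
  s 0 = 1 /\
  (* (ii) *)
  (sk 0 1 = 1 /\ forall k, 0 < k -> sk k 1 = 0) /\
  (* (iii) *)
  (sk 0 2 = 0 /\ sk 1 2 = 1 /\ forall k, 1 < k -> sk k 2 = 0) /\
  (* (iv) *)
  (forall m, 1 <= m ->
     sk m (2 ^ m) = 1 /\
     sk m.-1 (2 ^ m) =
       \sum_(0 <= j < m) \sum_(0 <= k < m.-1) sk k (2 ^ m - geom m.-1 j) /\
     forall k, k <> m -> k <> m.-1 -> sk k (2 ^ m) = 0) /\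
  (* (v) *)
  (forall m l, 1 <= m -> l < m ->
     sk m (geom m l) = 1 + \sum_(l <= j < m) \sum_(0 <= k < m) sk k (geom j l) /\
     sk m.-1 (geom m l) =
       \sum_(0 <= j < m) \sum_(0 <= k < m.-1) sk k (geom m l - geom m.-1 j) /\
     forall k, k <> m -> k <> m.-1 -> sk k (geom m l) = 0) /\
  (* (vi) *)
  (forall m l (a : nat -> bool), 2 <= l -> l < m ->
     (exists i, i < l.-1 /\ a i) ->
     sk m (geom m l + bin a l.-1) =
       \sum_(0 <= k < m) sk k (bin a l.-1)
       + \sum_(l <= j < m) \sum_(0 <= k < m) sk k (geom j l + bin a l.-1) /\
     sk m.-1 (geom m l + bin a l.-1) =
       \sum_(0 <= j < m) \sum_(0 <= k < m.-1)
          sk k (geom m l + bin a l.-1 - geom m.-1 j) /\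
     forall k, k <> m -> k <> m.-1 -> sk k (geom m l + bin a l.-1) = 0) /\
  (* (vii) *)
  (forall m (a : nat -> bool), 1 < m ->
     (exists i, i < m.-1 /\ a i) ->
     sk m (2 ^ m + bin a m.-1) = \sum_(0 <= k < m) sk k (bin a m.-1) /\
     sk m.-1 (2 ^ m + bin a m.-1) =
       \sum_(0 <= j < m) \sum_(0 <= k < m.-1)
          sk k (2 ^ m + bin a m.-1 - geom m.-1 j) /\
     forall k, k <> m -> k <> m.-1 -> sk k (2 ^ m + bin a m.-1) = 0).
Proof.
have e1 : sk 0 1 = 1 by rewrite /sk /inS /pair_val unlock; vm_compute.
have e2 : sk 0 2 = 0 by rewrite /sk /inS /pair_val unlock; vm_compute.
have e3 : sk 1 2 = 1 by rewrite /sk /inS /pair_val unlock; vm_compute.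
have gmm : forall m, geom m m = 2 ^ m.
  by move=> m; have := @geomE m m (leqnSn m); rewrite expnS; lia.
split; first by [].
split.
  split => // k k0; apply: (@skz 0) => //; lia.
split.
  split => //; split => // k k1; apply: (@skz 1) => //; lia.
split.
  move=> m m1; have hm := expn_gt0 2 m.
  split; first by have := @skm m m 0 (leqnn m); rewrite gmm addn0 big_geq // addn0 => ->.
  split; first by apply: skm1.
  by move=> k; apply: skz => //; rewrite expnS; lia.
split.
  move=> m l m1 lm; have [g1 g2] := geom_ge (ltnW lm).
  split.
    rewrite -[geom m l]addn0 (@skm m l 0 (ltnW lm)); last by rewrite muln0 expn_gt0.
    congr (_ + _); apply: eq_bigr => j _; apply: eq_bigr => k _; by rewrite addn0.
  split; first by apply: skm1.
  by move=> k; apply: skz.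
split.
  move=> m l a l2 lm [i [il ai]].
  have [g1 g2] := geom_ge (ltnW lm).
  have hl := @geomE m l (leqW (ltnW lm)).
  have bl := bin_lt a l.-1; have bp := bin_pos il ai.
  have e : 2 ^ l = 2 * 2 ^ l.-1 by rewrite -expnS prednK // ltnW.
  have hA : 2 * bin a l.-1 < 2 ^ l by lia.
  split; first by rewrite skm ?(ltnW lm) // /T ifF //; lia.
  split; first by apply: skm1; lia.
  by move=> k; apply: skz; lia.
move=> m a m1 [i [il ai]].
have bl := bin_lt a m.-1; have bp := bin_pos il ai.
have e : 2 ^ m = 2 * 2 ^ m.-1 by rewrite -expnS prednK // ltnW.
have hA : 2 * bin a m.-1 < 2 ^ m by lia.
have hm : 2 ^ m.+1 = 2 * 2 ^ m by rewrite expnS.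
split; first by rewrite -gmm skm // big_geq // addn0 /T ifF //; lia.
split; first by apply: skm1; lia.
by move=> k; apply: skz; lia.
Qed.
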